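(* Let $m\ge 1$ and $n\geq 3m+1$ be integers, and let $p,q$ be real numbers with $0<p\leq q$ and $0<p+q<1$. Then the minimum discrepancy of $C_{n,m}$ satisfies $$\delta(C_{n,m})\leq\min\{m^2,\ (1+\gamma)m\},$$ where $\gamma=\gamma_{p,q}=\log_{\frac{q}{1-p}}\left(\frac{p}{1-q}\right)$.
   Context: For integers $n\geq 2$, $N=\binom{n}{2}$ and $1\leq m\leq n$, the community code $C_{n,m}\subseteq\mathbb{F}_2^N$ consists of exactly those binary vectors of length $N$ that are the upper-triangular (off-diagonal) part of the adjacency matrix of a simple undirected graph on the labeled vertex set $\{1,\ldots,n\}$ which is a disjoint union of cliques, each clique having at least $m$ vertices. For $\mathbf{x},\mathbf{y}\in\mathbb{F}_2^N$ and $a,b\in\mathbb{F}_2$ let $d_{ab}(\mathbf{y},\mathbf{x})=|\{i: y_i=a,\ x_i=b\}|$. The discrepancy is $\delta(\mathbf{y},\mathbf{x})=\gamma\, d_{10}(\mathbf{y},\mathbf{x})+d_{01}(\mathbf{y},\mathbf{x})$ with $\gamma=\log_{\frac{q}{1-p}}\left(\frac{p}{1-q}\right)$. The minimum discrepancy $\delta(C)$ of a code $C$ is the minimum of $\delta(\mathbf{y},\mathbf{x})$ over all ordered pairs of distinct codewords $\mathbf{x},\mathbf{y}\in C$. *)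

(* Defs.v *)
From Stdlib Require Import Reals.
From mathcomp Require Import all_boot.

Set Implicit Arguments.
Unset Strict Implicit.
Unset Printing Implicit Defensive.

Local Open Scope R_scope.

(* Coordinate set of F_2^N, N = binom(n,2): unordered pairs {i,j}, i<j, of
   vertices in {0,...,n-1} (upper-triangular off-diagonal entries). *)
Definition coord (n : nat) : finType := {p : 'I_n * 'I_n | (p.1 < p.2)%N}.

Definition word (n : nat) : finType := {ffun coord n -> bool}.

(* Community code C_{n,m}: x is the upper-triangular part of the adjacency
   matrix of a disjoint union of cliques, each with at least m vertices. *)
Definition community_code (n m : nat) : pred (word n) :=
  fun x => [exists f : {ffun 'I_n -> 'I_n},
     [forall i : 'I_n, (m <= #|[set k : 'I_n | f k == f i]|)%N] &&
     [forall c : coord n, x c == (f (val c).1 == f (val c).2)]].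

Arguments community_code : clear implicits.

Definition dab (n : nat) (y x : word n) (a b : bool) : nat :=
  #|[set i : coord n | (y i == a) && (x i == b)]|.

Definition gamma (p q : R) : R := (ln (p / (1 - q)) / ln (q / (1 - p))).

Definition discrepancy (g : R) (n : nat) (y x : word n) : R :=
  g * INR (dab y x true false) + INR (dab y x false true).

(* Minimum discrepancy of a code C: the minimum of delta(y,x) over all ordered
   pairs (x,y) of distinct codewords.  (Convention: 0 if C has fewer than two
   codewords; this case does not arise in the theorem.) *)
Definition min_discrepancy (g : R) (n : nat) (C : pred (word n)) : R :=
  let ds := [seq discrepancy g xy.2 xy.1
            | xy <- enum [pred xy : word n * word n |
                           C xy.1 && C xy.2 && (xy.1 != xy.2)]] in
  match ds with
  | [::] => 0
  | d :: ds' => foldr Rmin d ds'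
  end.

(* Main.v *)
Require Import Defs.
From Stdlib Require Import Reals Lra.
From mathcomp Require Import all_boot zify.
Set Implicit Arguments. Unset Strict Implicit.

Definition gl (t1 t2 k : nat) : nat := if (k < t1)%N then 0%N else if (k < t2)%N then 1%N else 2%N.
Ltac crush := rewrite /gl; repeat (case: ltnP => ?); try lia.
Definition lab n t1 t2 : {ffun 'I_n.+1 -> 'I_n.+1} := [ffun i : 'I_n.+1 => inord (gl t1 t2 i)].
Definition wd n t1 t2 : word n.+1 := [ffun c : coord n.+1 => lab n t1 t2 (val c).1 == lab n t1 t2 (val c).2].

Lemma lab_eq n t1 t2 i j : (2 <= n)%N -> (lab n t1 t2 i == lab n t1 t2 j) = (gl t1 t2 i == gl t1 t2 j).
Proof.
move=> hn; rewrite !ffunE; apply/eqP/eqP => [/(congr1 (@nat_of_ord _))|->//].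
rewrite !inordK //; rewrite /gl; repeat case: ifP => _; lia.
Qed.

Lemma class_ge n m a (A : {set 'I_n.+1}) : (a + m <= n.+1)%N ->
  (forall j, (j < m)%N -> (inord (a + j) : 'I_n.+1) \in A) -> (m <= #|A|)%N.
Proof.
move=> ham H.
have Hinj : injective (fun j : 'I_m => inord (a + j) : 'I_n.+1).
  move=> j1 j2 /(congr1 (@nat_of_ord _)).
  have := ltn_ord j1; have := ltn_ord j2 => l2 l1.
  rewrite !inordK; try lia.
  by move/addnI/val_inj.
have E := card_imset [set: 'I_m] Hinj.
rewrite cardsT card_ord in E; rewrite -E.
apply: subset_leq_card; apply/subsetP => k /imsetP [j _ ->]; exact: H.
Qed.

Lemma wd_code n m t1 t2 : (2 <= n)%N -> (m <= t1)%N -> (t1 + m <= t2)%N ->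
  ((t2 + m <= n.+1)%N \/ t2 = n.+1) -> community_code n.+1 m (wd n t1 t2).
Proof.
move=> hn h1 h2 h3; apply/existsP; exists (lab n t1 t2); apply/andP; split; last first.
  by apply/forallP => c; rewrite ffunE.
apply/forallP => i.
have ltn := ltn_ord i.
have Hc : forall a, (a + m <= n.+1)%N -> (forall j, (j < m)%N -> gl t1 t2 (a + j) = gl t1 t2 i) ->
   (m <= #|[set k | lab n t1 t2 k == lab n t1 t2 i]|)%N.
  move=> a ha H; apply: (class_ge ha) => j hj; rewrite inE lab_eq // inordK ?H //; lia.
case: (ltnP i t1) => hi.
  apply: (Hc 0); [lia| move=> j hj; crush].
case: (ltnP i t2) => hi2.
  apply: (Hc t1); [lia| move=> j hj; crush].
apply: (Hc t2); [lia| move=> j hj; crush].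
Qed.

Lemma coord_eq n (c1 c2 : coord n) : ((val c1).1 = (val c2).1 :> nat) -> ((val c1).2 = (val c2).2 :> nat) -> c1 = c2.
Proof.
move: c1 c2 => [[a b] h] [[a' b'] h'] /= /val_inj e1 /val_inj e2.
by apply/val_inj => /=; rewrite e1 e2.
Qed.

Lemma inord_eq m (a b : nat) : (a <= m)%N -> (b <= m)%N -> (inord a : 'I_m.+1) = inord b -> a = b.
Proof. by move=> ha hb /(congr1 (@nat_of_ord _)); rewrite !inordK. Qed.

Lemma wdE n t1 t2 c : (2 <= n)%N -> wd n t1 t2 c = (gl t1 t2 (val c).1 == gl t1 t2 (val c).2).
Proof. by move=> hn; rewrite ffunE lab_eq. Qed.
Lemma d1_10 n m : (2 <= n)%N -> (3 * m <= n.+1)%N ->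
  dab (wd n m (2*m)) (wd n (2*m) n.+1) true false = 0%N.
Proof.
move=> hn hm; apply/eqP; rewrite cards_eq0; apply/eqP/setP => c.
rewrite !inE !wdE // eqb_id eqbF_neg.
case: c => [[u v] /= huv]; have := ltn_ord v; rewrite /gl => h1.
crush; done.
Qed.

Lemma d1_01 n k : (2 <= n)%N -> (3 * k.+1 <= n.+1)%N ->
  (dab (wd n k.+1 (2*k.+1)) (wd n (2*k.+1) n.+1) false true <= k.+1 * k.+1)%N.
Proof.
move=> hn hm; rewrite /dab.
pose f (c : coord n.+1) : 'I_k.+1 * 'I_k.+1 := (inord (val c).1, inord ((val c).2 - k.+1)).
have <- : #|{: 'I_k.+1 * 'I_k.+1}| = (k.+1 * k.+1)%N by rewrite card_prod card_ord.
apply: (@leq_card_in _ _ f) => c1 c2.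
rewrite !inE !wdE // !eqbF_neg !eqb_id.
case: c1 => [[u1 v1] /= h1]; case: c2 => [[u2 v2] /= h2].
have := ltn_ord v1; have := ltn_ord v2 => l2 l1.
move=> /andP [b1 b2] /andP [b3 b4].
have [a1 [a2 a3]] : (u1 < k.+1 /\ k.+1 <= v1 /\ v1 < 2*k.+1)%N by move: b1 b2; crush.
have [a4 [a5 a6]] : (u2 < k.+1 /\ k.+1 <= v2 /\ v2 < 2*k.+1)%N by move: b3 b4; crush.
rewrite /f /= => -[] /inord_eq E1 /inord_eq E2.
apply: coord_eq => /=; [apply: E1 | have := E2 _ _] ; lia.
Qed.
Lemma d2_10 n k : (2 <= n)%N -> (3 * k.+1 <= n)%N ->
  (dab (wd n k.+1 (2*k.+1).+1) (wd n k.+2 (2*k.+1).+1) true false <= k.+1)%N.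
Proof.
move=> hn hm; rewrite /dab.
pose f (c : coord n.+1) : 'I_k.+1 := inord ((val c).2 - k.+2).
rewrite -[X in (_ <= X)%N]card_ord.
apply: (@leq_card_in _ _ f) => c1 c2.
rewrite !inE !wdE // !eqbF_neg !eqb_id.
case: c1 => [[u1 v1] /= h1]; case: c2 => [[u2 v2] /= h2].
have := ltn_ord v1; have := ltn_ord v2 => l2 l1.
move=> /andP [b1 b2] /andP [b3 b4].
have [a1 [a2 a3]] : ((u1:nat) = k.+1 /\ k.+1 < v1 /\ v1 <= 2*k.+1)%N by move: b1 b2; crush.
have [a4 [a5 a6]] : ((u2:nat) = k.+1 /\ k.+1 < v2 /\ v2 <= 2*k.+1)%N by move: b3 b4; crush.
rewrite /f /= => /inord_eq E2.
apply: coord_eq => /=; [lia | have := E2 _ _] ; lia.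
Qed.

Lemma d2_01 n k : (2 <= n)%N -> (3 * k.+1 <= n)%N ->
  (dab (wd n k.+1 (2*k.+1).+1) (wd n k.+2 (2*k.+1).+1) false true <= k.+1)%N.
Proof.
move=> hn hm; rewrite /dab.
pose f (c : coord n.+1) : 'I_k.+1 := inord (val c).1.
rewrite -[X in (_ <= X)%N]card_ord.
apply: (@leq_card_in _ _ f) => c1 c2.
rewrite !inE !wdE // !eqbF_neg !eqb_id.
case: c1 => [[u1 v1] /= h1]; case: c2 => [[u2 v2] /= h2].
have := ltn_ord v1; have := ltn_ord v2 => l2 l1.
move=> /andP [b1 b2] /andP [b3 b4].
have [a1 a2] : (u1 < k.+1 /\ (v1:nat) = k.+1)%N by move: b1 b2; crush.
have [a4 a5] : (u2 < k.+1 /\ (v2:nat) = k.+1)%N by move: b3 b4; crush.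
rewrite /f /= => /inord_eq E2.
apply: coord_eq => /=; [have := E2 _ _ | ] ; lia.
Qed.

Lemma neq_w n a1 a2 b1 b2 (c : coord n.+1) : (2 <= n)%N ->
  (gl a1 a2 (val c).1 == gl a1 a2 (val c).2) != (gl b1 b2 (val c).1 == gl b1 b2 (val c).2) ->
  wd n a1 a2 != wd n b1 b2.
Proof.
move=> hn H; apply/eqP => E; move: H; by rewrite -!wdE // E eqxx.
Qed.

Local Open Scope R_scope.

Lemma fold_le0 (T : eqType) (F : T -> R) (s : seq T) d : (foldr Rmin d (map F s) <= d)%R.
Proof.
elim: s => [|a s IH] /=; first by apply: Rle_refl.
exact: Rle_trans (Rmin_r _ _) IH.
Qed.

Lemma fold_le (T : eqType) (F : T -> R) (s : seq T) d t : t \in s -> (foldr Rmin d (map F s) <= F t)%R.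
Proof.
elim: s => [|a s IH] //=; rewrite in_cons => /orP [/eqP ->|/IH h].
  exact: Rmin_l.
exact: Rle_trans (Rmin_r _ _) h.
Qed.

Lemma min_le g n (C : pred (word n)) x y : C x -> C y -> x != y ->
  (min_discrepancy g C <= discrepancy g y x)%R.
Proof.
move=> Cx Cy xy; rewrite /min_discrepancy.
have : (x, y) \in enum [pred xy : word n * word n | C xy.1 && C xy.2 && (xy.1 != xy.2)].
  by rewrite mem_enum; apply/andP; split; [apply/andP; split|].
case: (enum _) => [//|a s]; rewrite in_cons /= => /orP [/eqP <-|h].
  exact: fold_le0.
exact: (fold_le _ _ h).
Qed.

Lemma gamma_ge0 p q : (0 < p -> p <= q -> p + q < 1 -> 0 <= gamma p q)%R.
Proof.
move=> hp hpq h1; rewrite /gamma.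
have la : (ln (p / (1 - q)) < 0)%R.
  rewrite -ln_1; apply: ln_increasing.
    apply: Rdiv_lt_0_compat; lra.
  apply: (Rmult_lt_reg_r (1 - q)); first lra.
  rewrite /Rdiv Rmult_assoc Rinv_l; lra.
have lb : (ln (q / (1 - p)) < 0)%R.
  rewrite -ln_1; apply: ln_increasing.
    apply: Rdiv_lt_0_compat; lra.
  apply: (Rmult_lt_reg_r (1 - p)); first lra.
  rewrite /Rdiv Rmult_assoc Rinv_l; lra.
have := Rinv_lt_0_compat _ lb; rewrite /Rdiv; nra.
Qed.

Definition c0m n k (h : (k.+1 <= n)%N) : coord n.+1.
Proof.
refine (exist _ (ord0, inord k.+1) _).
by rewrite /= inordK.
Defined.

Theorem theorem3 (m n : nat) (p q : R) :
  (1 <= m)%N -> (3 * m + 1 <= n)%N ->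
  0 < p -> p <= q -> 0 < p + q -> p + q < 1 ->
  min_discrepancy (gamma p q) (community_code n m)
    <= Rmin (INR (m ^ 2)%N) ((1 + gamma p q) * INR m).
Proof.
move=> hm hn hp hpq hpq0 hpq1.
case: m hm hn => [//|k] _ hn.
case: n hn => [|n] hn; first by move: hn; rewrite addn1.
have hn2 : (2 <= n)%N by move: hn; lia.
have hk : (k.+1 <= n)%N by move: hn; lia.
have g0 := gamma_ge0 hp hpq hpq1.
apply: Rmin_glb.
- have Cx : community_code n.+1 k.+1 (wd n (2*k.+1) n.+1) by apply: wd_code => //; lia.
  have Cy : community_code n.+1 k.+1 (wd n k.+1 (2*k.+1)) by apply: wd_code => //; lia.
  have xy : wd n (2*k.+1) n.+1 != wd n k.+1 (2*k.+1).
    apply: (@neq_w _ _ _ _ _ (c0m hk)) => //=; rewrite inordK //; crush; done.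
  apply: Rle_trans (min_le _ Cx Cy xy) _.
  rewrite /discrepancy d1_10 //; last by move: hn; lia.
  have := d1_01 hn2 (_ : (3 * k.+1 <= n.+1)%N); move=> /(_ ltac:(move: hn; lia)) /leP /le_INR.
  rewrite -mulnn /=; lra.
- have Cx : community_code n.+1 k.+1 (wd n k.+2 (2*k.+1).+1) by apply: wd_code => //; lia.
  have Cy : community_code n.+1 k.+1 (wd n k.+1 (2*k.+1).+1) by apply: wd_code => //; lia.
  have xy : wd n k.+2 (2*k.+1).+1 != wd n k.+1 (2*k.+1).+1.
    apply: (@neq_w _ _ _ _ _ (c0m hk)) => //=; rewrite inordK //; crush; done.
  apply: Rle_trans (min_le _ Cx Cy xy) _.
  have hk3 : (3 * k.+1 <= n)%N by move: hn; lia.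
  have /leP/le_INR h1 := d2_10 hn2 hk3.
  have /leP/le_INR h2 := d2_01 hn2 hk3.
  rewrite /discrepancy; nra.
Qed.
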